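(* There exists a constant $C>0$ such that for each $D>1$ there exist ReLU neural networks $\phi_{D,\epsilon}\in \mathcal{N\!N}_{L,13,1,1}$ with $L \leq C(\log(1/\epsilon))^2\left(\lceil \log D\rceil^2 + (\log(1/\epsilon))^2\right)$ as $\epsilon\to 0$, such that $\| 1/x - \phi_{D,\epsilon}(x)\|_{L^\infty((1,D))}\leq \epsilon$, and with weights bounded in absolute value by a constant independent of $D$ and $\epsilon$.
   Context: ReLU activation $\varrho(x)=\max\{x,0\}$. A deep neural network (DNN) is a map $\Phi=\mathcal{A}_L\circ\varrho\circ\mathcal{A}_{L-1}\circ\cdots\circ\varrho\circ\mathcal{A}_1$ with affine maps $\mathcal{A}_k(\mathbf{x})=\mathbf{W}_k\mathbf{x}+\mathbf{b}_k$, $\mathbf{W}_k\in\mathbb{R}^{\ell_k\times\ell_{k-1}}$, $\varrho$ applied componentwise; its depth is $L$ and its width is $\max\{\ell_1,\dots,\ell_L\}$. $\mathcal{N\!N}_{L,M,\ell_0,\ell_L}$ denotes the set of ReLU DNNs with input dimension $\ell_0$, output dimension $\ell_L$, depth at most $L$ and width at most $M$. *)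

(* Defs.v *)
From Stdlib Require Import Reals Lra List.
Import ListNotations.
Open Scope R_scope.

Definition relu (x : R) : R := Rmax x 0.

(** A layer = an affine map x |-> W x + b.  Matrices / vectors are stored as
    functions on indices; only the entries with indices below the layer's
    input/output widths are ever used. *)
Definition layer : Type := ((nat -> nat -> R) * (nat -> R))%type.

Definition affine (win : nat) (W : nat -> nat -> R) (b : nat -> R)
  (x : nat -> R) : nat -> R :=
  fun i => fold_right Rplus 0 (map (fun j => W i j * x j) (seq 0 win)) + b i.

(** Evaluation of A_L o rho o A_{L-1} o ... o rho o A_1 ; [ws] lists the
    widths l_0, l_1, ..., l_L. *)
Fixpoint eval_layers (ws : list nat) (ls : list layer) (x : nat -> R)
  : nat -> R :=
  match ls, ws with
  | [], _ => x
  | [(W, b)], win :: _ => affine win W b x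
  | (W, b) :: ls', win :: ws' =>
      eval_layers ws' ls' (fun i => relu (affine win W b x i))
  | _, [] => x
  end.

Record network : Type := mkNet {
  nn_widths : list nat;
  nn_layers : list layer
}.

Definition depth (N : network) : nat := length (nn_layers N).

Definition width (N : network) : nat := fold_right max 0%nat (tl (nn_widths N)).

Definition in_NN (L M l0 lL : nat) (N : network) : Prop :=
  length (nn_widths N) = S (length (nn_layers N)) /\
  (1 <= depth N)%nat /\
  nth 0 (nn_widths N) 0%nat = l0 /\
  last (nn_widths N) 0%nat = lL /\
  (depth N <= L)%nat /\
  (width N <= M)%nat.

Definition weights_bounded (B : R) (N : network) : Prop :=
  forall k, (k < depth N)%nat ->
    let W := fst (nth k (nn_layers N) (fun _ _ => 0, fun _ => 0)) in
    let b := snd (nth k (nn_layers N) (fun _ _ => 0, fun _ => 0)) in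
    forall i, (i < nth (S k) (nn_widths N) 0)%nat ->
      Rabs (b i) <= B /\
      forall j, (j < nth k (nn_widths N) 0)%nat -> Rabs (W i j) <= B.

Definition realize1 (N : network) (x : R) : R :=
  eval_layers (nn_widths N) (nn_layers N) (fun _ => x) 0%nat.

(** ceiling: ceil x = - floor (- x), with Int_part the floor. *)
Definition ceil (x : R) : R := - IZR (Int_part (- x)).

(* Main.v *)
Require Import Defs.
From Stdlib Require Import Reals Lra Lia List Psatz ZArith.
Import ListNotations.
Open Scope R_scope.

Lemma relu_pos a : 0 <= a -> relu a = a.
Proof. intros; unfold relu, Rmax; destruct (Rle_dec a 0); lra. Qed.
Lemma relu_neg a : a <= 0 -> relu a = 0.
Proof. intros; unfold relu, Rmax; destruct (Rle_dec a 0); lra. Qed.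
Lemma relu_ge0 a : 0 <= relu a.
Proof. unfold relu, Rmax; destruct (Rle_dec a 0); lra. Qed.
Lemma relu_ge a : a <= relu a.
Proof. unfold relu, Rmax; destruct (Rle_dec a 0); lra. Qed.
Lemma relu_eqpos a b : a = b -> 0 <= b -> relu a = b.
Proof. intros ->; apply relu_pos. Qed.
Lemma relu_close a z : 0 <= z -> Rabs (relu a - z) <= Rabs (a - z).
Proof. intros; unfold relu, Rmax; destruct (Rle_dec a 0); unfold Rabs;
  repeat destruct Rcase_abs; lra. Qed.

Definition g (x : R) : R := 2 * x - 4 * relu (x - 1/2).
Definition G (n : nat) (t : R) : R := Nat.iter n g t.
Fixpoint A (n : nat) (t : R) : R :=
  match n with O => t | S n' => A n' t - g (G n' t) / 4 ^ (S n') end.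

Lemma G_S n t : G (S n) t = g (G n t).
Proof. reflexivity. Qed.
Lemma G_Sr n t : G (S n) t = G n (g t).
Proof. unfold G. rewrite Nat.iter_succ_r. reflexivity. Qed.

Lemma g_range x : 0 <= x <= 1 -> 0 <= g x <= 1.
Proof. intros; unfold g, relu, Rmax; destruct (Rle_dec (x - 1/2) 0); lra. Qed.
Lemma G_range n t : 0 <= t <= 1 -> 0 <= G n t <= 1.
Proof. intros H; induction n; [exact H| rewrite G_S; apply g_range; auto]. Qed.

Lemma sq_id x : 0 <= x <= 1 -> x ^ 2 = x - g x / 2 + (g x) ^ 2 / 4.
Proof. intros; unfold g, relu, Rmax; destruct (Rle_dec (x - 1/2) 0); nra. Qed.

Lemma A_shift n t : A (S n) t = t - g t / 2 + A n (g t) / 4.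
Proof.
  revert t; induction n; intros t.
  - simpl. unfold G; simpl. field.
  - change (A (S (S n)) t) with (A (S n) t - g (G (S n) t) / 4 ^ (S (S n))).
    rewrite IHn. change (A (S n) (g t)) with (A n (g t) - g (G n (g t)) / 4 ^ (S n)).
    rewrite G_Sr. simpl. field. apply pow_nonzero; lra.
Qed.

Lemma A_err n t : 0 <= t <= 1 -> 0 <= A n t - t ^ 2 <= / (4 * 4 ^ n).
Proof.
  revert t; induction n; intros t Ht.
  - simpl. replace (/ (4 * 1)) with (1/4) by field. destruct Ht. assert (0 <= (t - 1/2)^2) by apply pow2_ge_0. split; nra.
  - rewrite A_shift. rewrite (sq_id t Ht).
    destruct (IHn (g t) (g_range t Ht)) as [H1 H2].
    replace (t - g t / 2 + A n (g t) / 4 - (t - g t / 2 + g t ^ 2 / 4))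
      with ((A n (g t) - g t ^ 2) / 4) by field.
    split; [lra|]. simpl.
    assert (0 < 4 ^ n) by (apply pow_lt; lra).
    apply Rmult_le_reg_r with 4; [lra|].
    replace ((A n (g t) - g t ^ 2) / 4 * 4) with (A n (g t) - g t ^ 2) by field.
    replace (/ (4 * (4 * 4 ^ n)) * 4) with (/ (4 * 4 ^ n)) by (field; lra). lra.
Qed.

Lemma A_nonneg n t : 0 <= t <= 1 -> 0 <= A n t.
Proof. intros H; destruct (A_err n t H); nra. Qed.

Definition mul (m : nat) (a b : R) : R :=
  2 * (A m ((a + b) / 2) - A m (a / 2) - A m (b / 2)).

Lemma mul_err m a b : 0 <= a <= 1 -> 0 <= b <= 1 ->
  Rabs (mul m a b - a * b) <= / 4 ^ m.
Proof.
  intros Ha Hb. unfold mul.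
  destruct (A_err m ((a+b)/2)) as [H1 H2]; [lra|].
  destruct (A_err m (a/2)) as [H3 H4]; [lra|].
  destruct (A_err m (b/2)) as [H5 H6]; [lra|].
  rewrite Rinv_mult in *. 
  assert (0 < 4 ^ m) by (apply pow_lt; lra).
  assert (0 < / 4 ^ m) by (apply Rinv_0_lt_compat; lra).
  apply Rabs_le. split; nra.
Qed.

Fixpoint run (hs : list (nat * layer)) (x : nat -> R) : nat -> R :=
  match hs with
  | [] => x
  | (w, l) :: hs' => run hs' (fun i => relu (affine w (fst l) (snd l) x i))
  end.

Lemma run_app h1 h2 x : run (h1 ++ h2) x = run h2 (run h1 x).
Proof. revert x; induction h1 as [|[w l] h1 IH]; intros x; simpl; auto. Qed.

Lemma eval_net hs wf lf wo x :
  eval_layers (map fst hs ++ [wf; wo]) (map snd hs ++ [lf]) x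
  = affine wf (fst lf) (snd lf) (run hs x).
Proof.
  revert x; induction hs as [|[w l] hs IH]; intros x.
  - simpl. destruct lf; reflexivity.
  - simpl. rewrite <- IH. destruct l as [W b].
    destruct (map snd hs ++ [lf]) eqn:E.
    + destruct hs; discriminate.
    + reflexivity.
Qed.

Definition mkL (rows : list (list R * R)) : layer :=
  (fun i j => nth j (fst (nth i rows ([], 0))) 0, fun i => snd (nth i rows ([], 0))).

Definition vec (l : list R) : nat -> R := fun i => nth i l 0.

Definition agree (f h : nat -> R) := forall i, (i < 12)%nat -> f i = h i.

Definition maps (hs : list (nat * layer)) (l l' : list R) :=
  forall f, agree f (vec l) -> agree (run hs f) (vec l').

Lemma maps_app h1 h2 l1 l2 l3 : maps h1 l1 l2 -> maps h2 l2 l3 -> maps (h1 ++ h2) l1 l3.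
Proof. intros H1 H2 f Hf. rewrite run_app. apply H2, H1, Hf. Qed.

Lemma maps_nil l : maps [] l l.
Proof. intros f Hf; exact Hf. Qed.

Lemma affine_ext w W b f h i : (forall j, (j < w)%nat -> f j = h j) ->
  affine w W b f i = affine w W b h i.
Proof.
  intros H. unfold affine. f_equal.
  assert (Hs : forall j, In j (seq 0 w) -> f j = h j).
  { intros j Hj. apply in_seq in Hj. apply H. lia. }
  induction (seq 0 w) as [|a s IH]; simpl; auto.
  rewrite Hs by (left; auto). rewrite IH; auto.
  intros j Hj; apply Hs; right; auto.
Qed.

Lemma maps_layer w rows l l' : (w <= 12)%nat ->
  (forall i, (i < 12)%nat -> relu (affine w (fst (mkL rows)) (snd (mkL rows)) (vec l) i) = nth i l' 0) ->
  maps [(w, mkL rows)] l l'.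
Proof.
  intros Hw H f Hf i Hi. simpl. change (vec l' i) with (nth i l' 0). rewrite <- (H i Hi).
  f_equal. apply affine_ext. intros j Hj. apply Hf. lia.
Qed.

Definition z9 : list R := [0;0;0;0;0;0;0;0;0].

Definition unitrows (p : nat) (c : R) : list (list R * R) :=
  [(repeat 0 p ++ [2; -4], 0); (repeat 0 p ++ [2; -4], -(1/2));
   (repeat 0 p ++ [-2 * c; 4 * c; 1], 0)].

Definition carry3 : list (list R * R) := [([1], 0); ([0; 1], 0); ([0; 0; 1], 0)].

Definition tentL (s : nat) : layer :=
  mkL (carry3 ++ unitrows 3 (/ 4 ^ S s) ++ unitrows 6 (/ 4 ^ S s) ++ unitrows 9 (/ 4 ^ S s)).

Definition mst (s : nat) (u y w t1 t2 t3 : R) : list R :=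
  [u; y; w; G s t1; relu (G s t1 - 1/2); A s t1; G s t2; relu (G s t2 - 1/2); A s t2;
   G s t3; relu (G s t3 - 1/2); A s t3].

Ltac neuron :=
  first
  [ apply relu_eqpos; [ rewrite ?G_S; cbn [A]; unfold g; field; try (apply pow_nonzero; lra)
                      | first [assumption | lra | apply relu_ge0] ]
  | f_equal; rewrite ?G_S; unfold g; field; try (apply pow_nonzero; lra) ].

Ltac layer_solve :=
  intros i Hi; unfold affine;
  do 12 (destruct i as [|i]; [cbn [seq map fold_right nth fst snd mkL vec repeat app carry3 unitrows]; neuron | ]);
  lia.

Lemma tent_maps s u y w t1 t2 t3 :
  0 <= u -> 0 <= y -> 0 <= w -> 0 <= t1 <= 1 -> 0 <= t2 <= 1 -> 0 <= t3 <= 1 ->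
  maps [(12%nat, tentL s)] (mst s u y w t1 t2 t3) (mst (S s) u y w t1 t2 t3).
Proof.
  intros Hu Hy Hw H1 H2 H3.
  pose proof (G_range (S s) t1 H1). pose proof (G_range (S s) t2 H2). pose proof (G_range (S s) t3 H3).
  pose proof (A_nonneg (S s) t1 H1). pose proof (A_nonneg (S s) t2 H2). pose proof (A_nonneg (S s) t3 H3).
  apply maps_layer; [lia|]. unfold tentL, mst. layer_solve.
Qed.

Ltac neuron2 :=
  first
  [ apply relu_eqpos; [ rewrite ?G_S; cbn [A]; unfold g; field; try (apply pow_nonzero; lra)
                      | first [assumption | lra | apply relu_ge0] ]
  | f_equal; try unfold mul; rewrite ?G_S; unfold g; field; try (apply pow_nonzero; lra) ].

Ltac layer_solve2 :=
  intros i Hi; unfold affine;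
  do 12 (destruct i as [|i]; [cbn [seq map fold_right nth fst snd mkL vec repeat app carry3 unitrows]; neuron2 | ]);
  lia.

Fixpoint tents (s n : nat) : list (nat * layer) :=
  match n with O => [] | S n' => (12%nat, tentL s) :: tents (S s) n' end.

Lemma tents_maps n s u y w t1 t2 t3 :
  0 <= u -> 0 <= y -> 0 <= w -> 0 <= t1 <= 1 -> 0 <= t2 <= 1 -> 0 <= t3 <= 1 ->
  maps (tents s n) (mst s u y w t1 t2 t3) (mst (s + n) u y w t1 t2 t3).
Proof.
  intros. revert s; induction n; intros s.
  - rewrite Nat.add_0_r. apply maps_nil.
  - simpl tents. change ((12%nat, tentL s) :: tents (S s) n) with ([(12%nat, tentL s)] ++ tents (S s) n).
    eapply maps_app; [apply tent_maps; auto|]. replace (s + S n)%nat with (S s + n)%nat by lia. apply IHn.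
Qed.

Definition nstate (u y : R) : list R := [u; y; 0; 0; 0; 0; 0; 0; 0; 0; 0; 0].

Definition unit0rows (cs : list R) : list (list R * R) := [(cs, 0); (cs, -(1/2)); (cs, 0)].

Definition ML1 : layer := mkL ([([1], 0); ([0; 1], 0); ([], 0)] ++
   unit0rows [1/2; 1/2] ++ unit0rows [1/2] ++ unit0rows [0; 1/2]).
Definition ML2 : layer := mkL (carry3 ++
   unit0rows [0; 1/2; 1/2] ++ unit0rows [0; 1/2] ++ unit0rows [0; 0; 1/2]).
Definition Rd1 : layer := mkL [([1], 0); ([0; 1], 0); ([0;0;0;0;0;2;0;0;-2;0;0;-2], 0)].
Definition Dbl : layer := mkL [([1], 0); ([0; 1], 0); ([0; 0; 2], 0)].
Definition Wl : layer := mkL [([1], 0); ([0; 1], 0); ([0; 0; -(1/2)], 1)].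
Definition Rd2 : layer := mkL [([1], 0); ([0;0;0;0;0;4;0;0;-4;0;0;-4], 0); ([0;0;0;0;0;4;0;0;-4;0;0;-4], -1)].
Definition Clmp : layer := mkL [([1], 0); ([0; 1; -1], 0)].

Lemma mst0 u y w t1 t2 t3 : mst 0 u y w t1 t2 t3 =
  [u; y; w; t1; relu (t1 - 1/2); t1; t2; relu (t2 - 1/2); t2; t3; relu (t3 - 1/2); t3].
Proof. reflexivity. Qed.

Lemma ML1_maps u y : 0 <= u <= 1 -> 0 <= y <= 1 ->
  maps [(12%nat, ML1)] (nstate u y) (mst 0 u y 0 ((u + y) / 2) (u / 2) (y / 2)).
Proof.
  intros. rewrite mst0. apply maps_layer; [lia|]. unfold ML1, nstate, unit0rows. layer_solve2.
Qed.

Lemma ML2_maps u y w : 0 <= u <= 1 -> 0 <= y <= 1 -> 0 <= w <= 1 ->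
  maps [(12%nat, ML2)] ([u; y; w] ++ z9) (mst 0 u y w ((y + w) / 2) (y / 2) (w / 2)).
Proof.
  intros. rewrite mst0. apply maps_layer; [lia|]. unfold ML2, z9, unit0rows. layer_solve2.
Qed.

Lemma R1_maps m u y t1 t2 t3 : 0 <= u -> 0 <= y ->
  maps [(12%nat, Rd1)] (mst m u y 0 t1 t2 t3)
    ([u; y; relu (2 * (A m t1 - A m t2 - A m t3))] ++ z9).
Proof.
  intros. apply maps_layer; [lia|]. unfold Rd1, mst, z9. layer_solve2.
Qed.

Lemma Dbl_maps u y v : 0 <= u -> 0 <= y -> 0 <= v ->
  maps [(12%nat, Dbl)] ([u; y; v] ++ z9) ([u; y; 2 * v] ++ z9).
Proof.
  intros. apply maps_layer; [lia|]. unfold Dbl, z9. layer_solve2.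
Qed.

Lemma Wl_maps u y v : 0 <= u -> 0 <= y ->
  maps [(12%nat, Wl)] ([u; y; v] ++ z9) ([u; y; relu (1 - v / 2)] ++ z9).
Proof.
  intros. apply maps_layer; [lia|]. unfold Wl, z9. layer_solve2.
Qed.

Lemma Rd2_maps m u y w t1 t2 t3 : 0 <= u ->
  maps [(12%nat, Rd2)] (mst m u y w t1 t2 t3)
    ([u; relu (4 * (A m t1 - A m t2 - A m t3)); relu (4 * (A m t1 - A m t2 - A m t3) - 1)] ++ z9).
Proof.
  intros. apply maps_layer; [lia|]. unfold Rd2, mst, z9. layer_solve2.
Qed.

Lemma Clmp_maps u a b : 0 <= u ->
  maps [(12%nat, Clmp)] ([u; a; b] ++ z9) (nstate u (relu (a - b))).
Proof.
  intros. apply maps_layer; [lia|]. unfold Clmp, nstate, z9. layer_solve2.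
Qed.

Lemma dbls_maps n u y v : 0 <= u -> 0 <= y -> 0 <= v ->
  maps (repeat (12%nat, Dbl) n) ([u; y; v] ++ z9) ([u; y; 2 ^ n * v] ++ z9).
Proof.
  intros Hu Hy. revert v; induction n; intros v Hv.
  - simpl. rewrite Rmult_1_l. apply maps_nil.
  - change (repeat (12%nat, Dbl) (S n)) with ([(12%nat, Dbl)] ++ repeat (12%nat, Dbl) n).
    eapply maps_app; [apply Dbl_maps; auto|].
    replace (2 ^ S n * v) with (2 ^ n * (2 * v)) by (simpl; ring). apply IHn. lra.
Qed.

Definition nb (m k : nat) : list (nat * layer) :=
  [(12%nat, ML1)] ++ tents 0 m ++ [(12%nat, Rd1)] ++ repeat (12%nat, Dbl) k ++
  [(12%nat, Wl)] ++ [(12%nat, ML2)] ++ tents 0 m ++ [(12%nat, Rd2)] ++ [(12%nat, Clmp)].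

Definition clamp (q : R) : R := relu (relu q - relu (q - 1)).

Definition wval (m k : nat) (u y : R) : R := relu (1 - 2 ^ k * relu (mul m u y) / 2).

Definition ystep (m k : nat) (u y : R) : R := clamp (2 * mul m y (wval m k u y)).

Lemma clamp_range q : 0 <= clamp q <= 1.
Proof.
  unfold clamp, relu, Rmax.
  destruct (Rle_dec q 0); destruct (Rle_dec (q - 1) 0); destruct (Rle_dec _ 0); lra.
Qed.

Lemma wval_range m k u y : 0 <= wval m k u y <= 1.
Proof.
  unfold wval. pose proof (relu_ge0 (mul m u y)).
  assert (0 < 2 ^ k) by (apply pow_lt; lra).
  assert (0 <= 2 ^ k * relu (mul m u y)) by (apply Rmult_le_pos; lra).
  split; [apply relu_ge0|]. unfold relu at 1, Rmax. destruct (Rle_dec _ 0); lra.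
Qed.

Lemma nb_maps m k u y : 0 <= u <= 1 -> 0 <= y <= 1 ->
  maps (nb m k) (nstate u y) (nstate u (ystep m k u y)).
Proof.
  intros Hu Hy. unfold nb.
  pose proof (wval_range m k u y) as Hw.
  eapply maps_app; [apply ML1_maps; auto|].
  eapply maps_app; [apply tents_maps; lra|]. simpl Nat.add.
  eapply maps_app; [apply R1_maps; lra|].
  change (2 * (A m ((u + y) / 2) - A m (u / 2) - A m (y / 2))) with (mul m u y).
  eapply maps_app; [apply dbls_maps; try lra; apply relu_ge0|].
  eapply maps_app; [apply Wl_maps; lra|].
  change (relu (1 - 2 ^ k * relu (mul m u y) / 2)) with (wval m k u y).
  eapply maps_app; [apply ML2_maps; lra|].
  eapply maps_app; [apply tents_maps; lra|]. simpl Nat.add.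
  eapply maps_app; [apply Rd2_maps; lra|].
  replace (4 * (A m ((y + wval m k u y) / 2) - A m (y / 2) - A m (wval m k u y / 2)))
    with (2 * mul m y (wval m k u y)) by (unfold mul; ring).
  apply Clmp_maps; lra.
Qed.

Lemma nbs_maps K m k u y : 0 <= u <= 1 -> 0 <= y <= 1 ->
  maps (concat (repeat (nb m k) K)) (nstate u y) (nstate u (Nat.iter K (ystep m k u) y)).
Proof.
  intros Hu. revert y; induction K; intros y Hy.
  - apply maps_nil.
  - change (concat (repeat (nb m k) (S K))) with (nb m k ++ concat (repeat (nb m k) K)).
    eapply maps_app; [apply nb_maps; auto|].
    rewrite Nat.iter_succ_r. apply IHK. apply clamp_range.
Qed.

Definition Init1 (k : nat) : layer := mkL [([/ 2 ^ k], 0); ([/ 2 ^ k], -1)].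
Definition Init2 (k : nat) : layer := mkL [([1; -1], 0); ([], / 2 ^ k)].
Definition Final : layer := mkL [([0; 1], 0)].

Lemma Init1_maps k x :
  maps [(1%nat, Init1 k)] (repeat x 12)
    [relu (x / 2 ^ k); relu (x / 2 ^ k - 1); 0; 0; 0; 0; 0; 0; 0; 0; 0; 0].
Proof.
  apply maps_layer; [lia|]. unfold Init1. layer_solve2.
Qed.

Lemma Init2_maps k a b :
  maps [(12%nat, Init2 k)] [a; b; 0; 0; 0; 0; 0; 0; 0; 0; 0; 0] (nstate (relu (a - b)) (/ 2 ^ k)).
Proof.
  assert (0 <= / 2 ^ k) by (left; apply Rinv_0_lt_compat, pow_lt; lra).
  apply maps_layer; [lia|]. unfold Init2, nstate. layer_solve2.
Qed.

Definition hs (m k K : nat) : list (nat * layer) :=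
  [(1%nat, Init1 k); (12%nat, Init2 k)] ++ concat (repeat (nb m k) K).

Definition phi (m k K : nat) : network :=
  mkNet (map fst (hs m k K) ++ [12%nat; 1%nat]) (map snd (hs m k K) ++ [Final]).

Definition uval (k : nat) (x : R) : R := clamp (x / 2 ^ k).

Lemma realize_phi m k K x :
  realize1 (phi m k K) x = Nat.iter K (ystep m k (uval k x)) (/ 2 ^ k).
Proof.
  unfold realize1, phi. cbn [nn_widths nn_layers].
  rewrite eval_net.
  assert (Hy : 0 <= / 2 ^ k <= 1).
  { assert (1 <= 2 ^ k) by (apply pow_R1_Rle; lra). split.
    - left; apply Rinv_0_lt_compat; lra.
    - rewrite <- Rinv_1. apply Rinv_le_contravar; lra. }
  assert (Hag : agree (run (hs m k K) (fun _ => x))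
     (vec (nstate (uval k x) (Nat.iter K (ystep m k (uval k x)) (/ 2 ^ k))))).
  { assert (Hm : maps (hs m k K) (repeat x 12)
       (nstate (uval k x) (Nat.iter K (ystep m k (uval k x)) (/ 2 ^ k)))).
    { unfold hs. change [(1%nat, Init1 k); (12%nat, Init2 k)] with ([(1%nat, Init1 k)] ++ [(12%nat, Init2 k)]).
      eapply maps_app; [eapply maps_app; [apply Init1_maps | apply Init2_maps] | ].
      apply nbs_maps; auto. apply clamp_range. }
    apply Hm. intros i Hi. do 12 (destruct i as [|i]; [reflexivity|]). lia. }
  rewrite (affine_ext _ _ _ _ _ _ (fun j Hj => Hag j Hj)).
  unfold Final, affine. cbn [seq map fold_right nth fst snd mkL vec nstate]. ring.
Qed.

Lemma tents_len s n : length (tents s n) = n.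
Proof. revert s; induction n; intros s; simpl; auto. Qed.

Lemma concat_repeat_len {X} (l : list X) K : length (concat (repeat l K)) = (K * length l)%nat.
Proof. induction K; simpl; auto. rewrite length_app, IHK. lia. Qed.

Lemma nb_len m k : length (nb m k) = (2 * m + k + 6)%nat.
Proof. unfold nb. rewrite !length_app, !tents_len, repeat_length. simpl. lia. Qed.

Lemma depth_phi m k K : depth (phi m k K) = (3 + K * (2 * m + k + 6))%nat.
Proof.
  unfold depth, phi, hs; simpl. rewrite length_app, length_map, concat_repeat_len, nb_len. simpl. lia.
Qed.

Lemma tents_in s n p : In p (tents s n) -> fst p = 12%nat.
Proof. revert s; induction n; intros s; simpl; [tauto|]. intros [<-|H]; eauto. Qed.


Lemma nb_in m k p : In p (nb m k) -> fst p = 12%nat.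
Proof.
  unfold nb. intros H. repeat (apply in_app_iff in H; destruct H as [H|H]).
  all: first [ destruct H as [<-|[]]; reflexivity | apply repeat_spec in H; subst; reflexivity
             | eapply tents_in; eauto ].
Qed.

Lemma concat_repeat_in {X} (l : list X) K p : In p (concat (repeat l K)) -> In p l.
Proof. induction K; simpl; [tauto|]. intros H; apply in_app_iff in H; destruct H; auto. Qed.

Lemma fold_max_le (l : list nat) M : (forall w, In w l -> (w <= M)%nat) -> (fold_right max 0 l <= M)%nat.
Proof.
  induction l; simpl; intros H; [lia|]. apply Nat.max_lub; auto.
Qed.

Lemma in_NN_phi m k K : in_NN (3 + K * (2 * m + k + 6)) 13 1 1 (phi m k K).
Proof.
  unfold in_NN. rewrite depth_phi. repeat split; try lia.
  - unfold phi, hs; simpl. rewrite !length_app, !length_map. simpl. lia.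
  - unfold phi, hs; cbn [nn_widths map app fst].
    set (l := map fst (concat (repeat (nb m k) K))).
    replace (1%nat :: 12%nat :: l ++ [12%nat; 1%nat]) with ((1%nat :: 12%nat :: l ++ [12%nat]) ++ [1%nat])
      by (simpl; rewrite <- app_assoc; reflexivity).
    apply last_last.
  - unfold width, phi, hs. cbn [nn_widths map app tl fst]. apply fold_max_le. intros w [<-|Hw]; [lia|].
    apply in_app_iff in Hw. destruct Hw as [Hw|Hw].
    + apply in_map_iff in Hw. destruct Hw as [p [<- Hp]].
      apply concat_repeat_in, nb_in in Hp. lia.
    + simpl in Hw. lia.
Qed.

Definition lbnd (L : layer) := forall i j, Rabs (fst L i j) <= 4 /\ Rabs (snd L i) <= 4.

Lemma mkL_bnd rows : Forall (fun r => Forall (fun c => Rabs c <= 4) (fst r) /\ Rabs (snd r) <= 4) rows ->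
  lbnd (mkL rows).
Proof.
  intros H i j. unfold mkL; simpl.
  assert (Hd : Forall (fun c => Rabs c <= 4) (fst (nth i rows ([], 0))) /\ Rabs (snd (nth i rows ([], 0))) <= 4).
  { destruct (Nat.lt_ge_cases i (length rows)) as [Hi|Hi].
    - rewrite Forall_forall in H. apply H. apply nth_In; auto.
    - rewrite nth_overflow by auto. simpl. split; [constructor|]. rewrite Rabs_R0; lra. }
  destruct Hd as [H1 H2]. split; auto.
  destruct (Nat.lt_ge_cases j (length (fst (nth i rows ([], 0))))) as [Hj|Hj].
  - rewrite Forall_forall in H1. apply H1. apply nth_In; auto.
  - rewrite nth_overflow by auto. rewrite Rabs_R0; lra.
Qed.

Lemma inv_pow_bnd b n : 1 <= b -> 0 < / b ^ n <= 1.
Proof.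
  intros. assert (1 <= b ^ n) by (apply pow_R1_Rle; lra). split.
  - apply Rinv_0_lt_compat; lra.
  - rewrite <- Rinv_1. apply Rinv_le_contravar; lra.
Qed.

Ltac rabs_solve := apply Rabs_le; split; lra.

Ltac bnd_solve :=
  apply mkL_bnd; cbn [carry3 unitrows unit0rows repeat app];
  repeat (first [apply Forall_nil | apply Forall_cons | match goal with |- _ /\ _ => split end]);
  cbn [fst snd]; rabs_solve.

Lemma tents_in2 s n p : In p (tents s n) -> exists s', snd p = tentL s'.
Proof. revert s; induction n; intros s; simpl; [tauto|]. intros [<-|H]; [exists s; reflexivity|eauto]. Qed.


Lemma tentL_bnd s : lbnd (tentL s).
Proof.
  pose proof (inv_pow_bnd 4 (S s) ltac:(lra)) as Hk.
  unfold tentL. bnd_solve.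
Qed.

Lemma all_bnd m k K L : In L (nn_layers (phi m k K)) -> lbnd L.
Proof.
  pose proof (inv_pow_bnd 2 k ltac:(lra)) as Hk.
  unfold phi, hs; simpl. intros [<-|[<-|H]].
  - unfold Init1. bnd_solve.
  - unfold Init2. bnd_solve.
  - apply in_app_iff in H. destruct H as [H|[<-|[]]].
    + apply in_map_iff in H. destruct H as [p [<- Hp]].
      apply concat_repeat_in in Hp. unfold nb in Hp.
      repeat (apply in_app_iff in Hp; destruct Hp as [Hp|Hp]);
      try (destruct Hp as [<-|[]]; simpl snd).
      * unfold ML1, unit0rows. bnd_solve.
      * destruct (tents_in2 _ _ _ Hp) as [s' ->]. apply tentL_bnd.
      * unfold Rd1. bnd_solve.
      * apply repeat_spec in Hp. subst. unfold Dbl. bnd_solve.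
      * unfold Wl. bnd_solve.
      * unfold ML2. bnd_solve.
      * destruct (tents_in2 _ _ _ Hp) as [s' ->]. apply tentL_bnd.
      * unfold Rd2. bnd_solve.
      * unfold Clmp. bnd_solve.
    + unfold Final. bnd_solve.
Qed.

Lemma wb_phi m k K : weights_bounded 4 (phi m k K).
Proof.
  intros kk Hkk. cbv zeta.
  assert (Hin : In (nth kk (nn_layers (phi m k K)) (fun _ _ => 0, fun _ => 0)) (nn_layers (phi m k K)))
    by (apply nth_In; exact Hkk).
  pose proof (all_bnd _ _ _ _ Hin) as Hb.
  intros i Hi. split; [exact (proj2 (Hb i 0%nat)) | intros j Hj; exact (proj1 (Hb i j))].
Qed.

Lemma clamp_close q z : 0 <= z <= 1 -> Rabs (clamp q - z) <= Rabs (q - z).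
Proof.
  intros. unfold clamp, relu, Rmax.
  destruct (Rle_dec q 0); destruct (Rle_dec (q - 1) 0); destruct (Rle_dec _ 0);
  unfold Rabs; repeat destruct Rcase_abs; lra.
Qed.

Lemma abs_le_between a b : Rabs a <= b -> - b <= a <= b.
Proof. unfold Rabs; destruct Rcase_abs; intros; lra. Qed.

Lemma step_err m k u y :
  / 2 ^ k <= u <= 1 -> 0 <= y <= 1 -> Rabs (1 - 2 ^ k * u * y) <= 1 ->
  Rabs (1 - 2 ^ k * u * ystep m k u y) <=
    (1 - 2 ^ k * u * y) ^ 2 + 2 ^ k * (2 ^ k + 2) * / 4 ^ m.
Proof.
  intros Hu Hy He.
  set (M := 2 ^ k) in *. set (d := / 4 ^ m).
  assert (HM : 0 < M) by (apply pow_lt; lra).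
  assert (Hd : 0 < d) by (apply Rinv_0_lt_compat, pow_lt; lra).
  assert (HiM : 0 < / M) by (apply Rinv_0_lt_compat; lra).
  assert (HMu : 1 <= M * u).
  { apply Rmult_le_reg_l with (/ M). apply Rinv_0_lt_compat; lra.
    rewrite <- Rmult_assoc, Rinv_l by lra. lra. }
  assert (HMuy : 0 <= M * u * y <= 2).
  { revert He; unfold Rabs; destruct Rcase_abs; intros; lra. }
  unfold ystep.
  set (P := relu (mul m u y)).
  assert (HP : Rabs (P - u * y) <= d).
  { eapply Rle_trans; [apply relu_close|apply mul_err]; first [lra | apply Rmult_le_pos; lra]. }
  set (wv := wval m k u y).
  pose proof (wval_range m k u y) as Hwv. fold wv in Hwv.
  set (ws := 1 - M * u * y / 2).
  assert (Hw : Rabs (wv - ws) <= M * d / 2).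
  { unfold wv, wval. fold M. fold P.
    eapply Rle_trans; [apply relu_close; unfold ws; lra|].
    replace (1 - M * P / 2 - ws) with (- (M / 2) * (P - u * y)) by (unfold ws; field).
    rewrite Rabs_mult, Rabs_Ropp, Rabs_right by lra.
    replace (M * d / 2) with (M / 2 * d) by field.
    apply Rmult_le_compat_l; lra. }
  set (q := 2 * mul m y wv).
  assert (Hq : Rabs (q - 2 * y * wv) <= 2 * d).
  { unfold q. replace (2 * mul m y wv - 2 * y * wv) with (2 * (mul m y wv - y * wv)) by field.
    rewrite Rabs_mult, Rabs_right by lra. apply Rmult_le_compat_l; [lra|]. apply mul_err; lra. }
  assert (HqN : Rabs (q - 2 * y * ws) <= 2 * d + M * d).
  { replace (q - 2 * y * ws) with ((q - 2 * y * wv) + 2 * y * (wv - ws)) by field.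
    eapply Rle_trans; [apply Rabs_triang|]. rewrite Rabs_mult.
    rewrite (Rabs_right (2 * y)) by lra.
    assert (2 * y * Rabs (wv - ws) <= M * d).
    { replace (M * d) with (2 * (M * d / 2)) by field.
      apply Rle_trans with (2 * Rabs (wv - ws)). apply Rmult_le_compat_r. apply Rabs_pos. lra.
      lra. }
    lra. }
  set (z := / (M * u)).
  assert (Hz : 0 <= z <= 1).
  { unfold z. split. left; apply Rinv_0_lt_compat; lra.
    rewrite <- Rinv_1. apply Rinv_le_contravar; lra. }
  assert (Hc : Rabs (clamp q - z) <= Rabs (q - z)) by (apply clamp_close; auto).
  replace (1 - M * u * clamp q) with (- (M * u) * (clamp q - z)) by (unfold z; field; lra).
  rewrite Rabs_mult, Rabs_Ropp, (Rabs_right (M * u)) by lra.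
  apply Rle_trans with (M * u * Rabs (q - z)). apply Rmult_le_compat_l; lra.
  replace (M * u * Rabs (q - z)) with (Rabs (1 - M * u * q)).
  2: { replace (1 - M * u * q) with (- (M * u) * (q - z)) by (unfold z; field; lra).
       rewrite Rabs_mult, Rabs_Ropp, (Rabs_right (M * u)) by lra. reflexivity. }
  replace (1 - M * u * q) with ((1 - M * u * y) ^ 2 - M * u * (q - 2 * y * ws)) by (unfold ws; field).
  eapply Rle_trans; [apply Rabs_triang|]. rewrite Rabs_Ropp, Rabs_mult, (Rabs_right (M * u)) by lra.
  rewrite Rabs_right by (apply Rle_ge, pow2_ge_0).
  apply Rplus_le_compat_l.
  apply Rle_trans with (M * u * (2 * d + M * d)). apply Rmult_le_compat_l; lra.
  replace (M * (M + 2) * d) with (M * 1 * (2 * d + M * d)) by field.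
  apply Rmult_le_compat_r; [nra|]. apply Rmult_le_compat_l; lra.
Qed.

Definition Good (f : R -> R) (c rho : R) :=
  forall y, 0 <= y <= 1 -> Rabs (1 - c * y) <= 1 ->
    0 <= f y <= 1 /\ Rabs (1 - c * f y) <= (1 - c * y) ^ 2 + rho.

Lemma sq_abs a : (a) ^ 2 = Rabs a ^ 2.
Proof. unfold Rabs; destruct Rcase_abs; ring. Qed.

Lemma one_step f c rho y b : Good f c rho -> 0 <= y <= 1 -> Rabs (1 - c * y) <= b -> b <= 1 ->
  0 <= f y <= 1 /\ Rabs (1 - c * f y) <= b ^ 2 + rho.
Proof.
  intros H Hy Hb Hb1. destruct (H y Hy ltac:(lra)) as [H1 H2]. split; auto.
  rewrite sq_abs in H2. pose proof (Rabs_pos (1 - c * y)).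
  assert (Rabs (1 - c * y) ^ 2 <= b ^ 2) by (apply pow_incr; lra). lra.
Qed.

Lemma two_step f c rho y d : Good f c rho -> 0 <= y <= 1 -> Rabs (1 - c * y) <= 1 - d ->
  0 < d <= 1/4 -> 0 <= rho <= d / 8 ->
  0 <= f (f y) <= 1 /\ Rabs (1 - c * f (f y)) <= 1 - 2 * d.
Proof.
  intros H Hy He Hd Hr.
  destruct (one_step f c rho y (1 - d) H Hy He ltac:(lra)) as [H1 H2].
  assert (H3 : Rabs (1 - c * f y) <= 1 - 13/8 * d) by nra.
  destruct (one_step f c rho (f y) (1 - 13/8 * d) H H1 H3 ltac:(lra)) as [H4 H5].
  split; auto. nra.
Qed.

Lemma phase1 f c rho y0 kp : Good f c rho -> 0 <= y0 <= 1 ->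
  Rabs (1 - c * y0) <= 1 - / 2 ^ (kp + 2) -> 0 <= rho <= / (8 * 2 ^ (kp + 2)) ->
  forall j, (j <= kp)%nat ->
  0 <= Nat.iter (2 * j) f y0 <= 1 /\ Rabs (1 - c * Nat.iter (2 * j) f y0) <= 1 - 2 ^ j / 2 ^ (kp + 2).
Proof.
  intros H Hy0 He0 Hr. induction j; intros Hj.
  - simpl. split; auto. lra.
  - destruct (IHj ltac:(lia)) as [H1 H2].
    replace (2 * S j)%nat with (S (S (2 * j))) by lia.
    assert (HP : 0 < 2 ^ (kp + 2)) by (apply pow_lt; lra).
    assert (Hj2 : 2 ^ j <= 2 ^ kp) by (apply Rle_pow; [lra|lia]).
    assert (Hj0 : 0 < 2 ^ j) by (apply pow_lt; lra).
    rewrite pow_add in *. simpl in *.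
    replace (2 ^ j / (2 ^ kp * (2 * (2 * 1)))) with (2 ^ j / 2 ^ kp / 4) in * by (field; lra).
    replace (2 * 2 ^ j / (2 ^ kp * (2 * (2 * 1)))) with (2 * (2 ^ j / 2 ^ kp / 4)) by (field; lra).
    assert (Hq : 2 ^ j / 2 ^ kp <= 1).
    { apply Rmult_le_reg_r with (2 ^ kp). apply pow_lt; lra. unfold Rdiv. rewrite Rmult_assoc, Rinv_l; [lra|].
      apply pow_nonzero; lra. }
    assert (Hq0 : 0 < 2 ^ j / 2 ^ kp) by (apply Rdiv_lt_0_compat; apply pow_lt; lra).
    assert (Hkp : 1 <= 2 ^ kp) by (apply pow_R1_Rle; lra).
    assert (Hrr : / (8 * (2 ^ kp * (2 * (2 * 1)))) <= (2 ^ j / 2 ^ kp / 4) / 8).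
    { replace (/ (8 * (2 ^ kp * (2 * (2 * 1))))) with ((1 / 2 ^ kp) / 4 / 8) by (field; lra).
      unfold Rdiv. apply Rmult_le_compat_r; [lra|]. apply Rmult_le_compat_r; [lra|].
      apply Rmult_le_compat_r; [left; apply Rinv_0_lt_compat; lra|]. apply pow_R1_Rle; lra. }
    apply (two_step f c rho _ (2 ^ j / 2 ^ kp / 4)); auto; lra.
Qed.

Lemma phase2 f c rho y : Good f c rho -> 0 <= y <= 1 -> Rabs (1 - c * y) <= 1/2 -> 0 <= rho <= 1/8 ->
  forall j, 0 <= Nat.iter j f y <= 1 /\ Rabs (1 - c * Nat.iter j f y) <= 1/2 /\
            Rabs (1 - c * Nat.iter j f y) <= / 2 ^ j + 2 * rho.
Proof.
  intros H Hy He Hr. induction j.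
  - simpl. rewrite Rinv_1. split; auto. split; lra.
  - destruct IHj as [H1 [H2 H3]].
    set (b := Rmin (1/2) (/ 2 ^ j + 2 * rho)).
    assert (Hb : Rabs (1 - c * Nat.iter j f y) <= b) by (unfold b; apply Rmin_glb; auto).
    assert (Hb1 : b <= 1/2) by apply Rmin_l.
    assert (Hb2 : b <= / 2 ^ j + 2 * rho) by apply Rmin_r.
    assert (Hb0 : 0 <= b) by (pose proof (Rabs_pos (1 - c * Nat.iter j f y)); lra).
    destruct (one_step f c rho _ b H H1 Hb ltac:(lra)) as [H4 H5].
    simpl Nat.iter. split; auto.
    assert (b ^ 2 <= b / 2) by nra.
    split; [lra|]. simpl pow. rewrite Rinv_mult. lra.
Qed.

Lemma clamp_id q : 0 <= q <= 1 -> clamp q = q.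
Proof. intros. unfold clamp. rewrite (relu_pos q), (relu_neg (q - 1)) by lra. rewrite Rminus_0_r. apply relu_pos; lra. Qed.
Lemma clamp_one q : 1 <= q -> clamp q = 1.
Proof. intros. unfold clamp. rewrite (relu_pos q), (relu_pos (q - 1)) by lra. apply relu_eqpos; lra. Qed.

Lemma pow4 k : 4 ^ (2 * k + 2) = 16 * (2 ^ k) ^ 4.
Proof.
  replace 4 with (2 ^ 2) at 1 by (simpl; ring). rewrite <- pow_mult.
  replace (2 * (2 * k + 2))%nat with (k * 4 + 4)%nat by lia.
  rewrite pow_add, pow_mult. simpl. ring.
Qed.

Lemma main_err kp x : 1 < x ->
  let k := (kp + 2)%nat in let m := (2 * k + 2)%nat in let K := (k + (2 + 2 * kp))%nat in
  Rabs (1 / x - realize1 (phi m k K) x) <= 9 / 4 / 2 ^ k.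
Proof.
  intros Hx k m K. rewrite realize_phi.
  set (M := 2 ^ k).
  assert (HM4 : 4 <= M).
  { unfold M, k. rewrite pow_add. simpl. assert (1 <= 2 ^ kp) by (apply pow_R1_Rle; lra). lra. }
  assert (HiM : 0 < / M) by (apply Rinv_0_lt_compat; lra).
  set (u := uval k x).
  assert (Hu : / M <= u <= 1).
  { unfold u, uval. fold M. destruct (Rle_dec (x / M) 1) as [H|H].
    - rewrite clamp_id. split; [|lra]. unfold Rdiv. nra.
      split; [|lra]. unfold Rdiv; apply Rmult_le_pos; lra.
    - rewrite clamp_one by lra. split; [|lra]. rewrite <- Rinv_1. apply Rinv_le_contravar; lra. }
  set (c := M * u).
  assert (Hc : 1 <= c).
  { unfold c. apply Rmult_le_reg_l with (/ M); [lra|]. rewrite <- Rmult_assoc, Rinv_l by lra. lra. }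
  set (rho := M * (M + 2) * / 4 ^ m).
  assert (Hrho : 0 <= rho <= / (8 * M)).
  { unfold rho, m. rewrite pow4. fold M. split.
    - assert (0 < 16 * M ^ 4) by (apply Rmult_lt_0_compat; [lra | apply pow_lt; lra]).
      apply Rmult_le_pos; [apply Rmult_le_pos; lra|]. left; apply Rinv_0_lt_compat; lra.
    - assert (0 < 16 * M ^ 4) by (apply Rmult_lt_0_compat; [lra | apply pow_lt; lra]).
      apply Rmult_le_reg_r with (16 * M ^ 4); [lra|].
      rewrite Rmult_assoc, Rinv_l by lra.
      replace (/ (8 * M) * (16 * M ^ 4)) with (2 * M ^ 3) by (field; lra). nra. }
  assert (HG : Good (ystep m k u) c rho).
  { intros y Hy He. split; [apply clamp_range|]. unfold c, rho, M. apply step_err; auto. }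
  assert (Hy0 : 0 <= / M <= 1).
  { split; [lra|]. rewrite <- Rinv_1. apply Rinv_le_contravar; lra. }
  assert (He0 : Rabs (1 - c * / M) <= 1 - / 2 ^ (kp + 2)).
  { fold k M. unfold c. replace (M * u * / M) with u by (field; lra). rewrite Rabs_right; lra. }
  assert (Hr1 : 0 <= rho <= / (8 * 2 ^ (kp + 2))) by (fold k M; lra).
  destruct (phase1 _ _ _ _ kp HG Hy0 He0 Hr1 kp (le_n _)) as [H1 H2].
  replace (2 ^ kp / 2 ^ (kp + 2)) with (1 / 4) in H2 by (rewrite pow_add; simpl; field; apply pow_nonzero; lra).
  assert (Hr16 : rho <= 1 / 32).
  { apply Rle_trans with (/ (8 * M)); [lra|].
    replace (1 / 32) with (/ 32) by field. apply Rinv_le_contravar; lra. }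
  destruct (one_step _ _ _ _ (3/4) HG H1 ltac:(lra) ltac:(lra)) as [H3 H4].
  destruct (one_step _ _ _ _ (5/8) HG H3 ltac:(lra) ltac:(lra)) as [H5 H6].
  destruct (phase2 _ _ _ _ HG H5 ltac:(lra) ltac:(lra) k) as [H7 [_ H9]].
  unfold K. rewrite Nat.iter_add. rewrite (Nat.iter_add 2 (2 * kp)).
  fold M.
  replace (Nat.iter 2 (ystep m k u) (Nat.iter (2 * kp) (ystep m k u) (/ M)))
    with (ystep m k u (ystep m k u (Nat.iter (2 * kp) (ystep m k u) (/ M)))) by reflexivity.
  set (yK := Nat.iter k (ystep m k u) (ystep m k u (ystep m k u (Nat.iter (2 * kp) (ystep m k u) (/ M))))) in *.
  fold M in H9.
  assert (Hmid : Rabs (/ c - yK) <= / M + 2 * rho).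
  { replace (/ c - yK) with (/ c * (1 - c * yK)) by (field; lra).
    rewrite Rabs_mult, Rabs_right by (apply Rle_ge; left; apply Rinv_0_lt_compat; lra).
    apply Rle_trans with (1 * Rabs (1 - c * yK)); [|lra].
    apply Rmult_le_compat_r; [apply Rabs_pos|]. rewrite <- Rinv_1. apply Rinv_le_contravar; lra. }
  assert (Hout : Rabs (1 / x - / c) <= / M).
  { unfold c, u, uval. fold M. destruct (Rle_dec (x / M) 1) as [H|H].
    - rewrite clamp_id. replace (M * (x / M)) with x by (field; lra). unfold Rdiv. rewrite Rmult_1_l.
      rewrite Rminus_diag, Rabs_R0; lra.
      split; [|lra]. unfold Rdiv; apply Rmult_le_pos; lra.
    - rewrite clamp_one by lra. rewrite Rmult_1_r.
      assert (HxM : M < x).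
      { apply Rnot_le_lt in H. apply Rmult_lt_reg_r with (/ M); [lra|]. rewrite Rinv_r by lra. exact H. }
      assert (0 < / x < / M) by (split; [apply Rinv_0_lt_compat; lra | apply Rinv_lt_contravar; nra]).
      unfold Rdiv; rewrite Rmult_1_l. rewrite Rabs_left1; lra. }
  replace (1 / x - yK) with ((1 / x - / c) + (/ c - yK)) by ring.
  eapply Rle_trans; [apply Rabs_triang|].
  assert (rho <= / M / 8).
  { replace (/ M / 8) with (/ (8 * M)) by (field; lra). lra. }
  unfold Rdiv at 2. rewrite Rmult_comm.  lra.
Qed.

Theorem lemma3p8 :
  exists C : R, 0 < C /\
  exists B : R, 0 < B /\
  exists eps0 : R, 0 < eps0 < 1 /\
  forall D : R, 1 < D ->
  forall eps : R, 0 < eps < eps0 ->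
  exists (phi : network) (L : nat),
    in_NN L 13 1 1 phi /\
    INR L <= C * (ln (1 / eps)) ^ 2 * ((ceil (ln D)) ^ 2 + (ln (1 / eps)) ^ 2) /\
    (forall x : R, 1 < x < D -> Rabs (1 / x - realize1 phi x) <= eps) /\
    weights_bounded B phi.
Proof.
  exists 500. split; [lra|]. exists 4. split; [lra|]. exists (1/3). split; [lra|].
  intros D HD eps Heps.
  set (l := ln (1 / eps)).
  assert (H3 : exp 1 < 1 / eps).
  { pose proof exp_le_3. apply Rle_lt_trans with 3; [lra|].
    apply Rmult_lt_reg_r with eps; [lra|]. unfold Rdiv. rewrite Rmult_assoc, Rinv_l by lra. lra. }
  assert (Hl : ln (exp 1) < l) by (apply ln_increasing; [apply exp_pos | exact H3]).
  rewrite ln_exp in Hl.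
  set (z := up (2 * l)).
  destruct (archimed (2 * l)) as [Hz1 Hz2]. fold z in Hz1, Hz2.
  assert (Hz0 : (0 <= z)%Z) by (apply le_IZR; lra).
  set (kp := Z.to_nat z).
  assert (Hkp : INR kp = IZR z) by (unfold kp; rewrite INR_IZR_INZ, Z2Nat.id; auto).
  set (k := (kp + 2)%nat). set (m := (2 * k + 2)%nat). set (K := (k + (2 + 2 * kp))%nat).
  exists (phi m k K), (3 + K * (2 * m + k + 6))%nat.
  split; [apply in_NN_phi|]. split; [|split; [|apply wb_phi]].
  - replace (3 + K * (2 * m + k + 6))%nat with (15 * kp * kp + 80 * kp + 83)%nat by (unfold K, m, k; lia).
    rewrite !plus_INR, !mult_INR. 
    replace (INR 15) with 15 by (simpl; ring). replace (INR 80) with 80 by (simpl; ring).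
    replace (INR 83) with 83 by (simpl; ring).
    rewrite Hkp.
    assert (0 <= ceil (ln D) ^ 2) by apply pow2_ge_0.
    assert (l ^ 2 * ceil (ln D) ^ 2 >= 0) by (apply Rle_ge, Rmult_le_pos; [apply pow2_ge_0|lra]).
    assert (IZR z <= 3 * l) by lra.
    assert (0 <= IZR z) by lra.
    assert (IZR z * IZR z <= 9 * l ^ 2).
    { replace (9 * l ^ 2) with ((3 * l) * (3 * l)) by ring. apply Rmult_le_compat; lra. }
    assert (Hl2 : l <= l ^ 2) by (simpl; nra).
    assert (Hl4 : l ^ 2 <= l ^ 2 * l ^ 2) by (assert (1 <= l ^ 2) by lra; nra).
    replace (500 * l ^ 2 * (ceil (ln D) ^ 2 + l ^ 2)) with
      (500 * (l ^ 2 * ceil (ln D) ^ 2) + 500 * (l ^ 2 * l ^ 2)) by ring.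
    lra.
  - intros x [Hx _].
    eapply Rle_trans; [apply main_err; lra|].
    fold k.
    assert (Hp : 1 / eps < 2 ^ kp).
    { apply ln_lt_inv; [apply Rdiv_lt_0_compat; lra | apply pow_lt; lra |].
      rewrite ln_pow by lra. fold l. rewrite Hkp. pose proof ln_lt_2. nra. }
    unfold k. rewrite pow_add. simpl.
    assert (0 < 2 ^ kp) by (apply pow_lt; lra).
    apply Rmult_le_reg_r with (2 ^ kp * (2 * (2 * 1))). nra.
    unfold Rdiv. rewrite Rmult_assoc, Rinv_l by lra.
    assert (1 < eps * 2 ^ kp).
    { apply Rmult_lt_reg_l with (/ eps). apply Rinv_0_lt_compat; lra.
      rewrite <- Rmult_assoc, Rinv_l, Rmult_1_l by lra. unfold Rdiv in Hp. lra. }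
    nra.
Qed.
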